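(* Let $H\ge1$, $d_0=d_x$, $d_{H+1}=d_y$, and widths $d_1,\dots,d_H$ with $d_j\ge\min\{d_x,d_y\}$ for all $j$. For $W_j\in\mathbb{R}^{d_j\times d_{j-1}}$, $j\in[H+1]$, write $W_{H+1:1}=W_{H+1}W_H\cdots W_1$. Let $\ell_0:\mathbb{R}^{d_y\times d_x}\to\mathbb{R}$ be differentiable and assume every critical point of $\ell_0$ is a global minimum (resp. global maximum) of $\ell_0$. Define $\ell((W_j)_{j=1}^{H+1})=\ell_0(W_{H+1:1})$. Then for any critical point $(\hat W_j)_{j=1}^{H+1}$ of $\ell$: if $\nabla\ell_0(\hat W_{H+1:1})\ne0$ then $(\hat W_j)_{j=1}^{H+1}$ is a saddle point of $\ell$, and if $\nabla\ell_0(\hat W_{H+1:1})=0$ then $(\hat W_j)_{j=1}^{H+1}$ is a global minimum (resp. global maximum) of $\ell$.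
   Context: A saddle point is a critical point that is neither a local minimum nor a local maximum. $[a]=\{1,\dots,a\}$. *)

(* Defs.v *)
From HB Require Import structures.
From mathcomp Require Import all_boot all_order all_algebra.
From mathcomp Require Import all_classical all_reals all_analysis.
Set Implicit Arguments. Unset Strict Implicit. Unset Printing Implicit Defensive.
Import Order.TTheory GRing.Theory Num.Theory.
Import numFieldNormedType.Exports.
Local Open Scope ring_scope.

Section DeepLinear.
Variables (R : realType) (d : nat -> nat) (H : nat).

(* Parameters (W_j)_{j=1}^{H+1}: component j : 'I_(H+1) (0-based) is the
   matrix W_{j+1} in R^{d_{j+1} x d_j}. *)
Definition params := forall j : 'I_H.+1, 'M[R]_(d j.+1, d j).

(* W_{k+1} as a function of a natural index k (zero when k > H, never used). *)
Definition Wnat (W : params) (k : nat) : 'M[R]_(d k.+1, d k) :=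
  match (k < H.+1)%N as b return ((k < H.+1)%N = b -> 'M[R]_(d k.+1, d k)) with
  | true => fun h => W (Ordinal h)
  | false => fun _ => 0
  end erefl.

Fixpoint prodW (W : params) (k : nat) : 'M[R]_(d k, d 0) :=
  match k with
  | 0 => 1%:M
  | k'.+1 => Wnat W k' *m prodW W k'
  end.

Definition prodAll (W : params) : 'M[R]_(d H.+1, d 0) := prodW W H.+1.

Definition loss (ell0 : 'M[R]_(d H.+1, d 0) -> R) (W : params) : R :=
  ell0 (prodAll W).

Definition params_line (W V : params) (t : R) : params :=
  fun j => W j + t *: V j.

(* Critical point of f on the parameter space: every directional derivative
   at W exists and vanishes (equivalently, the gradient is zero, since the
   loss is differentiable). *)
Definition crit_point (f : params -> R) (W : params) : Prop :=
  forall V : params, is_derive (0 : R) (1 : R) (fun t : R => f (params_line W V t)) 0.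

Definition local_min (f : params -> R) (W : params) : Prop :=
  exists2 e : R, 0 < e &
    forall W' : params, (forall j, ball (W j) e (W' j)) -> f W <= f W'.

Definition local_max (f : params -> R) (W : params) : Prop :=
  exists2 e : R, 0 < e &
    forall W' : params, (forall j, ball (W j) e (W' j)) -> f W' <= f W.

Definition saddle_point (f : params -> R) (W : params) : Prop :=
  crit_point f W /\ ~ local_min f W /\ ~ local_max f W.

Definition global_min (f : params -> R) (W : params) : Prop :=
  forall W' : params, f W <= f W'.

Definition global_max (f : params -> R) (W : params) : Prop :=
  forall W' : params, f W' <= f W.

End DeepLinear.

(* Main.v *)
Require Import Defs.
From HB Require Import structures.
From mathcomp Require Import all_boot all_order all_algebra.
From mathcomp Require Import all_classical all_reals all_analysis.
Import Order.TTheory GRing.Theory Num.Theory.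
Import numFieldNormedType.Exports.
Local Open Scope ring_scope.
Set Implicit Arguments. Unset Strict Implicit.

Section Struct.
Variables (R : realType) (d : nat -> nat) (H : nat).
Implicit Types W : params R d H.

Definition castI k : 'M[R]_(d H.+1, d k) := \matrix_(i, j) ((i : nat) == j)%:R.

Fixpoint upA W (n k : nat) {struct n} : 'M[R]_(d H.+1, d k) :=
  match n with 0 => castI k | n'.+1 => upA W n' k.+1 *m Wnat W k end.

Definition Aup W k := upA W (H.+1 - k) k.

Definition upd W (j : 'I_H.+1) (X : 'M[R]_(d j.+1, d j)) : params R d H :=
  @dfwith _ (fun j : 'I_H.+1 => 'M[R]_(d j.+1, d j)) W j X.
Arguments upd : clear implicits.

Lemma WnatE W k (hk : (k < H.+1)%N) : Wnat W k = W (Ordinal hk).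
Proof.
rewrite /Wnat.
generalize (@erefl bool (k < H.+1)%N).
generalize (k < H.+1)%N at 2 3 => b; case: b => e.
  by rewrite (bool_irrelevance e hk).
by rewrite hk in e.
Qed.

Lemma Wnat_ge W k : (H.+1 <= k)%N -> Wnat W k = 0.
Proof.
move=> hk; rewrite /Wnat.
generalize (@erefl bool (k < H.+1)%N).
generalize (k < H.+1)%N at 2 3 => b; case: b => e //.
by move: hk; rewrite leqNgt e.
Qed.

Lemma Wnat_upd_in W (j : 'I_H.+1) X : Wnat (upd W j X) j = X.
Proof.
case: j X => k hk X; rewrite (WnatE _ hk) /upd.
exact: dfwith_in.
Qed.

Lemma Wnat_upd_out W (j : 'I_H.+1) X (k : nat) : k != j :> nat -> Wnat (upd W j X) k = Wnat W k.
Proof.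
move=> ne; case: (ltnP k H.+1) => hk.
  rewrite !(WnatE _ hk) /upd; apply: dfwith_out.
  by apply/eqP => hj; move: ne; rewrite hj /= eqxx.

by rewrite !Wnat_ge.
Qed.

Lemma prodW_upd W (j : 'I_H.+1) X k : (k <= j)%N -> prodW (upd W j X) k = prodW W k.
Proof.
elim: k => [//|k IH] hk /=.
rewrite IH ?(ltnW hk) // Wnat_upd_out //.
by rewrite neq_ltn hk.
Qed.

Lemma upA_upd W (j : 'I_H.+1) X n k : (j < k)%N -> upA (upd W j X) n k = upA W n k.
Proof.
elim: n k => [//|n IH] k hk /=.
rewrite IH ?(ltnW (ltnSn _)) ?(ltn_trans hk) // Wnat_upd_out //.
by rewrite neq_ltn hk orbT.
Qed.

Lemma castI_top : castI H.+1 = 1%:M.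
Proof. by apply/matrixP => i j; rewrite !mxE. Qed.

Lemma upA_prod W n k : (n + k = H.+1)%N -> upA W n k *m prodW W k = prodAll W.
Proof.
elim: n k => [|n IH] k /=.
  by rewrite add0n => hk; subst k; rewrite castI_top mul1mx.
move=> hk; rewrite -mulmxA.
have -> : Wnat W k *m prodW W k = prodW W k.+1 by [].
by apply: IH; rewrite addnS -hk.
Qed.

Lemma Aup_S W k : (k <= H)%N -> Aup W k = Aup W k.+1 *m Wnat W k.
Proof. by move=> hk; rewrite /Aup subSn. Qed.

Lemma Aup_top W : Aup W H.+1 = 1%:M.
Proof. by rewrite /Aup subnn /= castI_top. Qed.

Lemma prodAll_split W k : (k <= H.+1)%N -> prodAll W = Aup W k *m prodW W k.
Proof. by move=> hk; rewrite /Aup upA_prod // subnK. Qed.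

Lemma prodAll_upd W (j : 'I_H.+1) X :
  prodAll (upd W j X) = Aup W j.+1 *m X *m prodW W j.
Proof.
have hj : (j <= H)%N by rewrite -ltnS.
rewrite (prodAll_split _ (ltnW (ltn_ord j))) Aup_S // Wnat_upd_in.
by rewrite /Aup upA_upd // prodW_upd // mulmxA.
Qed.

Lemma upd_same W (j : 'I_H.+1) : upd W j (W j) = W.
Proof.
rewrite /upd; apply: functional_extensionality_dep => i.
by case: dfwithP.
Qed.

End Struct.
Arguments upd [R] [d] [H] W j X j0 : rename.


Section Fermat.
Variables (R : realType) (m n : nat) (f : 'M[R]_(m, n) -> R).
Hypothesis hf : forall M, differentiable f M.

Lemma line_derivable (P D : 'M[R]_(m, n)) t :
  derivable (fun s : R => f (s *: D + P)) t 1.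
Proof.
have : derivable f (t *: D + P) D by apply: diff_derivable.
rewrite /derivable.
have -> : (fun h : R => h^-1 *: (f ((h *: 1 + t) *: D + P) - f (t *: D + P)))
   = (fun h : R => h^-1 *: (f (h *: D + (t *: D + P)) - f (t *: D + P))) :> (R -> R).
  by apply/funext => h; rewrite [h *: 1]mulr1 scalerDl addrA.
by [].
Qed.

Lemma line_derive (P D : 'M[R]_(m, n)) :
  'D_1 (fun s : R => f (s *: D + P)) 0 = 'd f P D.
Proof.
rewrite -deriveE // /derive.
have -> : (fun h : R => h^-1 *: (f ((h *: 1 + 0) *: D + P) - f (0 *: D + P)))
   = (fun h : R => h^-1 *: (f (h *: D + P) - f P)) :> (R -> R).
  by apply/funext => h; rewrite [h *: 1]mulr1 addr0 scale0r add0r.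
by [].
Qed.

Lemma fermat_min (P D : 'M[R]_(m, n)) (e : R) : 0 < e ->
  (forall t : R, `|t| < e -> f P <= f (t *: D + P)) -> 'd f P D = 0.
Proof.
move=> e0 hmin; rewrite -line_derive.
have h : is_derive (0:R) (1:R) (fun s : R => f (s *: D + P)) 0.
  apply: (@derive1_at_min R _ (- e) e 0).
  - by rewrite ge0_cp // ltW.
  - by move=> t _; apply: line_derivable.
  - by rewrite in_itv /= oppr_lt0 e0.
  move=> t; rewrite in_itv /= => /andP[h1 h2].
  rewrite scale0r add0r; apply: hmin.
  by rewrite ltr_norml h1 h2.
by rewrite derive_val.
Qed.

Lemma fermat_max (P D : 'M[R]_(m, n)) (e : R) : 0 < e ->
  (forall t : R, `|t| < e -> f (t *: D + P) <= f P) -> 'd f P D = 0.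
Proof.
move=> e0 hmax; rewrite -line_derive.
have h : is_derive (0:R) (1:R) (fun s : R => f (s *: D + P)) 0.
  apply: (@derive1_at_max R _ (- e) e 0).
  - by rewrite ge0_cp // ltW.
  - by move=> t _; apply: line_derivable.
  - by rewrite in_itv /= oppr_lt0 e0.
  move=> t; rewrite in_itv /= => /andP[h1 h2].
  rewrite scale0r add0r; apply: hmax.
  by rewrite ltr_norml h1 h2.
by rewrite derive_val.
Qed.

End Fermat.


Section Balls.
Variable R : realType.

Lemma ball_line p q (x y N : 'M[R]_(p, q)) (e : R) : ball x e y ->
  exists2 del : R, 0 < del & forall t : R, `|t| < del -> ball x e (t *: N + y).
Proof.
rewrite -ball_normE /ball_ /= => hxy.
exists ((e - `|x - y|) / (`|N| + 1)).
  by apply: divr_gt0; rewrite ?subr_gt0 // ltr_pwDl.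
move=> t ht.
have hN : 0 <= `|N| by [].
rewrite opprD addrC -addrA (le_lt_trans (ler_normD _ _)) //.
rewrite normrN normrZ -ltrBrDr.
apply: (le_lt_trans (y := `|t| * (`|N| + 1))).
  by apply: ler_wpM2l => //; rewrite lerDl.
by rewrite [- y + x]addrC -ltr_pdivlMr // ltr_pwDl.
Qed.
End Balls.

Section Core.
Variables (R : realType) (d : nat -> nat) (H : nat).
Variables (W0 : params R d H) (e : R) (L : 'M[R]_(d H.+1, d 0%N) -> R).
Hypothesis hL : forall a M N, L (a *: M + N) = a * L M + L N.

Lemma L0 : L 0 = 0.
Proof.
have := hL 1 0 0; rewrite scaler0 addr0 mul1r => /eqP.
by move/eqP => h; apply: (addrI (L 0)); rewrite -h addr0.
Qed.

Lemma L_line M N t : L (M + t *: N) = L M + t * L N.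
Proof. by rewrite addrC hL addrC. Qed.

Lemma L_delta p q (F : 'M[R]_(p, q) -> 'M[R]_(d H.+1, d 0%N))
  (hF : forall a M N, F (a *: M + N) = a *: F M + F N) :
  (forall i j, L (F (delta_mx i j)) = 0) -> forall V, L (F V) = 0.
Proof.
move=> hd V.
have F0 : F 0 = 0.
  have := hF 1 0 0; rewrite scaler0 addr0 scale1r => /eqP.
  by move/eqP => h; apply: (addrI (F 0)); rewrite -h addr0.
have G0 : L (F 0) = 0 by rewrite F0 L0.
have GD : forall M N, L (F M) = 0 -> L (F N) = 0 -> L (F (M + N)) = 0.
  by move=> M N h1 h2; rewrite -[M]scale1r hF hL h1 h2 mulr0 addr0.
rewrite (matrix_sum_delta V).
apply: (big_ind (fun M => L (F M) = 0)) => // i _.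
apply: (big_ind (fun M => L (F M) = 0)) => // j _.
by rewrite -[_ *: delta_mx _ _]addr0 hF hL hd mulr0 add0r G0.
Qed.

Definition inPhi (W' : params R d H) :=
  prodAll W' = prodAll W0 /\ forall j, ball (W0 j) e (W' j).

Lemma upd_ball W' (j : 'I_H.+1) Y : (forall i, ball (W0 i) e (W' i)) ->
  ball (W0 j) e Y -> forall i, ball (W0 i) e (upd W' j Y i).
Proof. by move=> hW hY i; rewrite /upd; case: dfwithP. Qed.

Lemma move_phi W' (j : 'I_H.+1) N : inPhi W' ->
  Aup W' j.+1 *m N *m prodW W' j = 0 ->
  exists2 t : R, t != 0 & inPhi (upd W' j (t *: N + W' j)).
Proof.
move=> [hP hB] hN.
have [del del0 hdel] := ball_line N (hB j).
exists (del / 2); first by rewrite mulf_neq0 // ?gt_eqF // invr_eq0.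
split; last first.
  apply: upd_ball => //; apply: hdel.
  rewrite ger0_norm ?divr_ge0 ?ltW //.
  by rewrite ltr_pdivrMr // ltr_pMr // ltr1n.
rewrite prodAll_upd mulmxDr mulmxDl -scalemxAr -scalemxAl hN scaler0 add0r.
by rewrite -prodAll_upd upd_same.
Qed.

Hypothesis hcrit : forall W', inPhi W' ->
  forall (j : 'I_H.+1) X, L (prodAll (upd W' j X)) = 0.

End Core.


Section MxHelp.
Variable R : realType.

Lemma delta_col p q (a : 'I_p) (i : 'I_q) (c : 'cV[R]_q) :
  delta_mx a i *m c = c i 0 *: delta_mx a 0.
Proof.
apply/matrixP => x y; rewrite !mxE (bigD1 i) //= big1 ?addr0.
  rewrite !mxE eqxx andbT [y]ord1 eqxx andbT.
  by case: (x == a); rewrite ?mul1r ?mulr1 ?mul0r ?mulr0.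
by move=> k /negPf hk; rewrite !mxE hk andbF mul0r.
Qed.

Lemma row_delta p q (r : 'rV[R]_p) (i : 'I_p) (b : 'I_q) :
  r *m delta_mx i b = r 0 i *: delta_mx 0 b.
Proof.
apply/matrixP => x y; rewrite !mxE (bigD1 i) //= big1 ?addr0.
  rewrite !mxE eqxx [x]ord1 eqxx /=.
  by case: (y == b); rewrite ?mul1r ?mulr1 ?mul0r ?mulr0.
by move=> k /negPf hk; rewrite !mxE hk mulr0.
Qed.

Lemma kernel_or_free p q (M : 'M[R]_(p, q)) :
  row_free M \/ exists r : 'rV[R]_p, exists i, r 0 i != 0 /\ r *m M = 0.
Proof.
case hf: (row_free M); first by left.
right; move: hf; rewrite -kermx_eq0 => /negbT /rowV0Pn [v hv vn0].
have [i hi] := rV0Pn _ vn0.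
by exists v, i; split => //; apply/sub_kermxP.
Qed.

End MxHelp.

Section TopDown.
Variables (R : realType) (d : nat -> nat) (H : nat).
Variables (W0 : params R d H) (e : R) (L : 'M[R]_(d H.+1, d 0%N) -> R).
Hypothesis hL : forall a M N, L (a *: M + N) = a * L M + L N.
Hypothesis hcrit : forall W', inPhi W0 e W' ->
  forall (j : 'I_H.+1) X, L (prodAll (upd W' j X)) = 0.

Definition Tprop n := forall W', inPhi W0 e W' ->
  forall V : 'M[R]_(d H.+1, d n), L (V *m prodW W' n) = 0.

Lemma T_top : Tprop H.
Proof.
move=> W' hW V.
have := hcrit (j := ord_max) hW V.
by rewrite prodAll_upd Aup_top mul1mx.
Qed.

Hypothesis hdy : forall k, (1 <= k <= H)%N -> (d H.+1 <= d k)%N.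

Lemma T_step n (hn : (n < H)%N) : Tprop n.+1 -> Tprop n.
Proof.
move=> hT W' hW.
have hn1 : (n < H.+1)%N by apply: ltnW.
pose jn : 'I_H.+1 := Ordinal hn1.
have [hfree | [v [i [hvi hv]]]] := kernel_or_free (Aup W' n.+1)^T.
  have hrk : row_full (Aup W' n.+1)^T.
    rewrite /row_full eqn_leq rank_leq_col /=.
    move: hfree; rewrite /row_free => /eqP ->.
    by apply: hdy; rewrite hn.
  have [B0 hB0] := row_fullP hrk.
  have hA : Aup W' n.+1 *m B0^T = 1%:M.
    by rewrite -[Aup W' n.+1]trmxK -trmx_mul hB0 trmx1.
  move=> V.
  have := hcrit (j := jn) hW (B0^T *m V).
  by rewrite prodAll_upd /= mulmxA hA mul1mx.
apply: (L_delta hL (F := fun V => V *m prodW W' n)).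
  by move=> a M N; rewrite mulmxDl scalemxAl.
move=> a b.
have hAc : Aup W' n.+1 *m v^T = 0.
  by rewrite -[Aup W' n.+1]trmxK -trmx_mul hv trmx0.
pose N := v^T *m (delta_mx (0 : 'I_1) b : 'M[R]_(1, d n)).
have hN : Aup W' jn.+1 *m N *m prodW W' jn = 0.
  by rewrite /N /= mulmxA hAc !mul0mx.
have [t t0 hWt] := move_phi (j := jn) (N := N) hW hN.
pose Y : 'M[R]_(d H.+1, d n.+1) := (v 0 i)^-1 *: delta_mx a i.
have h1 := hT _ hWt Y.
have h2 := hT _ hW Y.
have hYN : Y *m N = delta_mx a b.
  rewrite /Y /N -scalemxAl mulmxA.
  have -> : delta_mx a i *m v^T = v 0 i *: delta_mx a 0.
    by rewrite delta_col mxE.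
  by rewrite -scalemxAl scalerA mulVf // scale1r mul_delta_mx.
move: h1 h2; rewrite /= Wnat_upd_in prodW_upd // (WnatE _ hn1).
move=> h1 h2.
have e1 : Y *m ((t *: N + W' jn) *m prodW W' n) =
    Y *m (W' jn *m prodW W' n) + t *: (delta_mx a b *m prodW W' n).
  by rewrite -hYN mulmxDl mulmxDr addrC -scalemxAl -scalemxAr !mulmxA.
move: h1; rewrite e1 L_line // h2 add0r => /eqP.
by rewrite mulf_eq0 (negPf t0) => /eqP.
Qed.

Lemma T_all : Tprop 0.
Proof.
suff : forall i, (i <= H)%N -> Tprop (H - i).
  by move=> /(_ H (leqnn _)); rewrite subnn.
elim => [|i IH] hi; first by rewrite subn0; exact: T_top.
have hlt : (H - i.+1 < H)%N by rewrite ltn_subrL; case: H hi.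
apply: T_step => //.
by rewrite subnS prednK ?subn_gt0 //; apply: IH; apply: ltnW.
Qed.

Lemma T_final : inPhi W0 e W0 -> forall V, L V = 0.
Proof. by move=> h V; have := T_all h V; rewrite /= mulmx1. Qed.

End TopDown.

Section BottomUp.
Variables (R : realType) (d : nat -> nat) (H : nat).
Variables (W0 : params R d H) (e : R) (L : 'M[R]_(d H.+1, d 0%N) -> R).
Hypothesis hL : forall a M N, L (a *: M + N) = a * L M + L N.
Hypothesis hcrit : forall W', inPhi W0 e W' ->
  forall (j : 'I_H.+1) X, L (prodAll (upd W' j X)) = 0.

Definition Uprop n := forall W', inPhi W0 e W' ->
  forall Y : 'M[R]_(d n, d 0%N), L (Aup W' n *m Y) = 0.

Lemma U_bot : Uprop 1.
Proof.
move=> W' hW Y.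
have := hcrit (j := ord0) hW Y.
by rewrite prodAll_upd /= mulmx1.
Qed.

Hypothesis hdx : forall k, (1 <= k <= H)%N -> (d 0%N <= d k)%N.

Lemma U_step n (hn0 : (1 <= n)%N) (hn : (n <= H)%N) : Uprop n -> Uprop n.+1.
Proof.
move=> hU W' hW.
have hn1 : (n < H.+1)%N by [].
pose jn : 'I_H.+1 := Ordinal hn1.
have [hfree | [r [i [hri hr]]]] := kernel_or_free (prodW W' n).
  have hrk : row_full (prodW W' n).
    rewrite /row_full eqn_leq rank_leq_col /=.
    move: hfree; rewrite /row_free => /eqP ->.
    by apply: hdx; rewrite hn0 hn.
  have [C hC] := row_fullP hrk.
  move=> Y.
  have := hcrit (j := jn) hW (Y *m C).
  by rewrite prodAll_upd /= -!mulmxA hC mulmx1.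
apply: (L_delta hL (F := fun Y => Aup W' n.+1 *m Y)).
  by move=> a M N; rewrite mulmxDr scalemxAr.
move=> a b.
pose N := (delta_mx a (0 : 'I_1) : 'cV[R]_(d n.+1)) *m r.
have hN : Aup W' jn.+1 *m N *m prodW W' jn = 0.
  by rewrite /N /= -!mulmxA hr !mulmx0.
have [t t0 hWt] := move_phi (j := jn) (N := N) hW hN.
pose Y : 'M[R]_(d n, d 0%N) := (r 0 i)^-1 *: delta_mx i b.
have h1 := hU _ hWt Y.
have h2 := hU _ hW Y.
have hNY : N *m Y = delta_mx a b.
  rewrite /Y /N -scalemxAr -mulmxA row_delta -scalemxAr scalerA mulVf //.
  by rewrite scale1r mul_delta_mx.
clearbody Y.
move: h1 h2; rewrite (Aup_S _ hn) (Aup_S _ hn) /Aup upA_upd // -/(Aup W' n.+1) Wnat_upd_in.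
rewrite (WnatE _ hn1) => h1 h2.
have e1 : Aup W' n.+1 *m (t *: N + W' jn) *m Y =
    Aup W' n.+1 *m W' jn *m Y + t *: (Aup W' n.+1 *m delta_mx a b).
  by rewrite -hNY mulmxDr mulmxDl addrC -scalemxAr -scalemxAl mulmxA.
move: h1; rewrite /Aup e1 L_line // -/(Aup W' n.+1) h2 add0r => /eqP.
by rewrite mulf_eq0 (negPf t0) => /eqP.
Qed.

Lemma U_all : Uprop H.+1.
Proof.
suff : forall i, (i <= H)%N -> Uprop i.+1 by apply.
elim => [|i IH] hi; first exact: U_bot.
by apply: U_step => //; apply: IH; apply: ltnW.
Qed.

Lemma U_final : inPhi W0 e W0 -> forall V, L V = 0.
Proof. by move=> h V; have := U_all h V; rewrite Aup_top mul1mx. Qed.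

End BottomUp.


Section Main.
Variables (R : realType) (d : nat -> nat) (H : nat).
Variable ell0 : 'M[R]_(d H.+1, d 0%N) -> R.
Hypothesis hdiff : forall M : 'M[R]_(d H.+1, d 0%N), differentiable ell0 M.
Hypothesis hwidth : forall j : nat, (1 <= j <= H)%N -> (minn (d 0%N) (d H.+1) <= d j)%N.

Lemma line_prod (W' : params R d H) (j : 'I_H.+1) X t :
  prodAll (upd W' j (t *: X + W' j)) = t *: prodAll (upd W' j X) + prodAll W'.
Proof.
rewrite !prodAll_upd mulmxDr mulmxDl -scalemxAr -scalemxAl.
congr (_ + _); by rewrite -[in RHS](upd_same W' j) prodAll_upd.
Qed.

Lemma dzero_of_crit (W : params R d H) (e : R) : 0 < e ->
  (forall W', inPhi W e W' -> forall (j : 'I_H.+1) X,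
     'd ell0 (prodAll W) (prodAll (upd W' j X)) = 0) ->
  'd ell0 (prodAll W) = 0 :> ('M[R]_(d H.+1, d 0%N) -> R).
Proof.
move=> e0 hcrit.
have hL : forall a M N, 'd ell0 (prodAll W) (a *: M + N) =
    a * 'd ell0 (prodAll W) M + 'd ell0 (prodAll W) N.
  by move=> a M N; rewrite linearP.
have hW : inPhi W e W by split => // j; apply: ballxx.
apply/funext => V.
case: (leqP (d H.+1) (d 0%N)) => hle.
  apply: (T_final hL hcrit _ hW) => k hk.
  by have := hwidth hk; rewrite (minn_idPr hle).
apply: (U_final hL hcrit _ hW) => k hk.
by have := hwidth hk; rewrite (minn_idPl (ltnW hle)).
Qed.

Lemma not_local_min (W : params R d H) :
  'd ell0 (prodAll W) <> 0 :> ('M[R]_(d H.+1, d 0%N) -> R) ->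
  ~ local_min (loss ell0) W.
Proof.
move=> hne [e e0 hmin]; apply: hne; apply: (dzero_of_crit e0).
move=> W' [hP hB] j X.
have [del del0 hdel] := ball_line X (hB j).
apply: (fermat_min hdiff del0) => t ht.
suff : loss ell0 W <= loss ell0 (upd W' j (t *: X + W' j)) by rewrite /loss line_prod hP.
apply: hmin; apply: upd_ball => //; exact: hdel.
Qed.

Lemma not_local_max (W : params R d H) :
  'd ell0 (prodAll W) <> 0 :> ('M[R]_(d H.+1, d 0%N) -> R) ->
  ~ local_max (loss ell0) W.
Proof.
move=> hne [e e0 hmax]; apply: hne; apply: (dzero_of_crit e0).
move=> W' [hP hB] j X.
have [del del0 hdel] := ball_line X (hB j).
apply: (fermat_max hdiff del0) => t ht.
suff : loss ell0 (upd W' j (t *: X + W' j)) <= loss ell0 W by rewrite /loss line_prod hP.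
apply: hmax; apply: upd_ball => //; exact: hdel.
Qed.

End Main.

Unset Implicit Arguments.
Set Strict Implicit.

Theorem corollary2 (R : realType) (H : nat) (d : nat -> nat)
  (hH : (1 <= H)%N)
  (hwidth : forall j : nat, (1 <= j <= H)%N -> (minn (d 0%N) (d H.+1) <= d j)%N)
  (ell0 : 'M[R]_(d H.+1, d 0%N) -> R)
  (hdiff : forall M : 'M[R]_(d H.+1, d 0%N), differentiable ell0 M) :
  ((forall M : 'M[R]_(d H.+1, d 0%N), 'd ell0 M = 0 :> ('M[R]_(d H.+1, d 0%N) -> R) ->
      forall M' : 'M[R]_(d H.+1, d 0%N), ell0 M <= ell0 M') ->
    forall W : params R d H, crit_point (loss ell0) W ->
      ('d ell0 (prodAll W) <> 0 :> ('M[R]_(d H.+1, d 0%N) -> R) ->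
         saddle_point (loss ell0) W) /\
      ('d ell0 (prodAll W) = 0 :> ('M[R]_(d H.+1, d 0%N) -> R) ->
         global_min (loss ell0) W))
  /\
  ((forall M : 'M[R]_(d H.+1, d 0%N), 'd ell0 M = 0 :> ('M[R]_(d H.+1, d 0%N) -> R) ->
      forall M' : 'M[R]_(d H.+1, d 0%N), ell0 M' <= ell0 M) ->
    forall W : params R d H, crit_point (loss ell0) W ->
      ('d ell0 (prodAll W) <> 0 :> ('M[R]_(d H.+1, d 0%N) -> R) ->
         saddle_point (loss ell0) W) /\
      ('d ell0 (prodAll W) = 0 :> ('M[R]_(d H.+1, d 0%N) -> R) ->
         global_max (loss ell0) W)).
Proof.
split => hglob W hcrit; split.
- move=> hne; split; first exact: hcrit.
  by split; [exact: (not_local_min hdiff hwidth) | exact: (not_local_max hdiff hwidth)].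
- by move=> h0 W'; rewrite /loss; exact: hglob.
- move=> hne; split; first exact: hcrit.
  by split; [exact: (not_local_min hdiff hwidth) | exact: (not_local_max hdiff hwidth)].
- by move=> h0 W'; rewrite /loss; exact: hglob.
Qed.
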